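(* Let $g$ and $s$ be integers with $s \geq -1$ and $g \geq 4s + 14$, and put $d = g - s$. Then $d^2 - 6(2g-2)$ is not a perfect square. *)

(* Defs.v *)
From Stdlib Require Import ZArith Lia.
Open Scope Z_scope.
Definition is_perfect_square (n : Z) : Prop := exists k : Z, k * k = n.

(* Main.v *)
Require Import Defs.
From Stdlib Require Import ZArith Lia.
Open Scope Z_scope.

Theorem lemma2p1 (g s : Z) (hs : -1 <= s) (hg : 4 * s + 14 <= g) :
  ~ is_perfect_square ((g - s) ^ 2 - 6 * (2 * g - 2)).
Proof.
  intros [k Hk].
  set (m := g - s - 6) in *.
  assert (Hm : m >= 3 * s + 8) by (unfold m; lia).
  assert (HN : k * k = m * m - 12 * (s + 2)) by (unfold m in *; rewrite Hk; ring).
  clearbody m.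
  set (a := Z.abs k).
  assert (Ha : a * a = k * k) by (unfold a; destruct (Z.abs_eq_or_opp k) as [E|E]; rewrite E; ring).
  assert (a >= 0) by (unfold a; lia).
  clearbody a. rewrite <- Ha in HN.
  destruct (Z_lt_le_dec a m) as [L|L].
  - assert (a = m - 1 \/ a = m - 2 \/ a <= m - 3) as [E|[E|E]] by lia.
    + subst a. lia.
    + subst a. lia.
    + nia.
  - nia.
Qed.
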